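(* Let $p$ be a prime and $n\ge1$, and let $A,B,Q\in\mathbb{L}_p^{n\times n}$ with $\det(Q)\neq0$ and $AQ=QB$. Then the linear cellular automaton over $(\mathbb{Z}/p\mathbb{Z})^n$ with associated matrix $A$ is positively expansive if and only if the linear cellular automaton over $(\mathbb{Z}/p\mathbb{Z})^n$ with associated matrix $B$ is positively expansive.
   Context: $\mathbb{L}_p=\mathbb{Z}/p\mathbb{Z}[X,X^{-1}]$. The linear cellular automaton over $(\mathbb{Z}/p\mathbb{Z})^n$ with associated matrix $\sum_{j=-r}^rA_jX^{-j}$ ($A_j\in(\mathbb{Z}/p\mathbb{Z})^{n\times n}$) is the map $\mathcal{F}$ on $((\mathbb{Z}/p\mathbb{Z})^n)^{\mathbb{Z}}$ with $\mathcal{F}(c)_i=\sum_{j=-r}^rA_jc_{i+j}$. The configuration space carries the metric $d(c,c')=2^{-\min\{|j|:c_j\neq c'_j\}}$ ($d(c,c)=0$). $\mathcal{F}$ is positively expansive if there is $\varepsilon>0$ such that for all configurations $c\neq c'$ there is $\ell\in\mathbb{N}$ with $d(\mathcal{F}^\ell(c),\mathcal{F}^\ell(c'))\geq\varepsilon$. *)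

(* Defs.v *)
From Stdlib Require Import Reals ClassicalEpsilon.
From mathcomp Require Import all_boot all_order all_algebra fraction.
Set Implicit Arguments. Unset Strict Implicit. Unset Printing Implicit Defensive.
Import Order.TTheory GRing.Theory Num.Theory.
Local Open Scope ring_scope.

Definition zrange (r : nat) : seq int :=
  [seq ((k%:Z) - (r%:Z))%R | k <- iota 0 (r + r).+1].

(* A matrix over L_p = (Z/pZ)[X,X^-1] is represented by its family of
   coefficient matrices j |-> A_j (the matrix is sum_j A_j X^{-j}),
   supported in [-r, r]. *)
Definition supported (p n r : nat) (A : int -> 'M['F_p]_n) : Prop :=
  forall j : int, (r < `|j|)%N -> A j = 0.

(* Embedding L_p^{n x n} -> Frac(F_p[X])^{n x n} (an injective ring morphism,
   so products and determinants are those of L_p^{n x n}). *)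
Definition lmx (p n r : nat) (A : int -> 'M['F_p]_n)
  : 'M[{fraction {poly 'F_p}}]_n :=
  \matrix_(i, k) \sum_(j <- zrange r)
      FracField.tofrac (A j i k)%:P * (FracField.tofrac ('X : {poly 'F_p})) ^ (- j).

Definition config (p n : nat) := int -> 'cV['F_p]_n.

Definition lca (p n r : nat) (A : int -> 'M['F_p]_n) (c : config p n)
  : config p n :=
  fun i => \sum_(j <- zrange r) (A j *m c (i + j)).

Definition decb (P : Prop) : bool :=
  if excluded_middle_informative P then true else false.

(* d(c,c') = 2^{-min{|j| : c_j <> c'_j}}, d(c,c) = 0 *)
Definition cdist (p n : nat) (c c' : config p n) : R :=
  match excluded_middle_informative
          (exists m : nat, decb (exists j : int, `|j|%N = m /\ c j <> c' j)) with
  | left H => Rinv (pow 2 (ex_minn H))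
  | right _ => R0
  end.

Definition pos_expansive (p n : nat) (F : config p n -> config p n) : Prop :=
  exists eps : R, Rlt R0 eps /\
    forall c c' : config p n, c <> c' ->
      exists l : nat, Rle eps (cdist (iter l F c) (iter l F c')).

(* Main.v *)
Require Import Defs.
From Stdlib Require Import Reals ClassicalEpsilon FunctionalExtensionality Classical Lra.
From mathcomp Require Import all_boot all_order all_algebra fraction zify.
Import Order.TTheory GRing.Theory Num.Theory.
Set Implicit Arguments. Unset Strict Implicit. Unset Printing Implicit Defensive.
Local Open Scope ring_scope.


Definition cm (K : comNzRingType) n (M : 'M[{poly K}]_n) k : 'M[K]_n :=
  \matrix_(a, b) (M a b)`_k.
Definition Gs (K : comNzRingType) n (T : nat) (M : 'M[{poly K}]_n)
  (c : int -> 'cV[K]_n) : int -> 'cV[K]_n :=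
  fun i => \sum_(0 <= k < T) cm M k *m c (i - k%:Z).
Definition bnd (K : comNzRingType) n (M : 'M[{poly K}]_n) T :=
  forall k, (T <= k)%N -> cm M k = 0.
Definition msize (K : comNzRingType) n (M : 'M[{poly K}]_n) : nat :=
  \max_(ab : 'I_n * 'I_n) size (M ab.1 ab.2).
Definition G (K : comNzRingType) n (M : 'M[{poly K}]_n) := Gs (msize M) M.

Lemma bnd_msize (K : comNzRingType) n (M : 'M[{poly K}]_n) : bnd M (msize M).
Proof.
move=> k hk; apply/matrixP=> a b; rewrite !mxE nth_default //.
apply: leq_trans hk; exact: (leq_bigmax_cond (a, b)).
Qed.

Lemma Gs_widen (K : comNzRingType) n (M : 'M[{poly K}]_n) T T' c i :
  bnd M T -> (T <= T')%N -> Gs T' M c i = Gs T M c i.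
Proof.
move=> hb hT; rewrite /Gs (big_cat_nat (leq0n T) hT) /=.
suff -> : \sum_(T <= k < T') cm M k *m c (i - k%:Z) = 0 by rewrite addr0.
rewrite big_nat_cond big1 // => k /andP [/andP [hk _] _].
by rewrite hb // mul0mx.
Qed.

Lemma G_Gs (K : comNzRingType) n (M : 'M[{poly K}]_n) T c i :
  bnd M T -> G M c i = Gs T M c i.
Proof.
move=> hb; rewrite /G -(@Gs_widen _ _ _ (msize M) (maxn (msize M) T)) ?leq_maxl //.
  by rewrite (@Gs_widen _ _ _ T) // ?leq_maxr. exact: bnd_msize.
Qed.


Lemma conv_id (V : zmodType) (g : nat -> nat -> V) N :
  \sum_(0 <= m < N) \sum_(0 <= l < m.+1) g l (m - l)%N =
  \sum_(0 <= k < N) \sum_(0 <= l < N - k) g k l.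
Proof.
elim: N => [|N IH]; first by rewrite !big_geq.
rewrite big_nat_recr //= IH.
rewrite [RHS](eq_big_nat _ _ (F2 := fun k => \sum_(0 <= l < N - k) g k l + g k (N - k)%N)); last first.
  move=> k /andP [_ hk]; rewrite subSn // big_nat_recr //.
rewrite big_split /= [in RHS](big_nat_recr N) //= subnn [X in _ + X + _]big_geq // addr0 //.
Qed.

Lemma conv_trunc (V : zmodType) (g : nat -> nat -> V) S T :
  (forall k l, (S <= k)%N -> g k l = 0) -> (forall k l, (T <= l)%N -> g k l = 0) ->
  \sum_(0 <= m < S + T) \sum_(0 <= l < m.+1) g l (m - l)%N =
  \sum_(0 <= k < S) \sum_(0 <= l < T) g k l.
Proof.
move=> hS hT; rewrite conv_id (big_cat_nat (leq0n S) (leq_addr T S)) /=.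
rewrite [X in _ + X](_ : _ = 0) ?addr0; last first.
  rewrite big_nat_cond big1 // => k /andP [/andP [hk _] _].
  by rewrite big1 // => l _; rewrite hS.
apply: eq_big_nat => k /andP [_ hk].
have hTk : (T <= S + T - k)%N by lia.
rewrite (big_cat_nat (leq0n T) hTk) /=.
rewrite [X in _ + X](_ : _ = 0) ?addr0 //.
by rewrite big_nat_cond big1 // => l /andP [/andP [hl _] _]; rewrite hT.
Qed.

Lemma cm_mul (K : comNzRingType) n (M N : 'M[{poly K}]_n) k :
  cm (M *m N) k = \sum_(0 <= l < k.+1) cm M l *m cm N (k - l)%N.
Proof.
apply/matrixP=> a b; rewrite !mxE coef_sum summxE big_mkord.
under eq_bigr do rewrite coefM.
rewrite exchange_big /=; apply: eq_bigr => l _.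
by rewrite !mxE; apply: eq_bigr => j _; rewrite !mxE.
Qed.

Lemma bnd_mul (K : comNzRingType) n (M N : 'M[{poly K}]_n) S T :
  bnd M S -> bnd N T -> bnd (M *m N) (S + T).
Proof.
move=> hM hN k hk; rewrite cm_mul big_nat_cond big1 // => l /andP [/andP [_ hl] _].
case: (leqP S l) => hSl; first by rewrite hM // mul0mx.
by rewrite hN ?mulmx0 //; lia.
Qed.

Lemma G_mul (K : comNzRingType) n (M N : 'M[{poly K}]_n) c i :
  G (M *m N) c i = G M (G N c) i.
Proof.
have hM := @bnd_msize _ _ M; have hN := @bnd_msize _ _ N.
rewrite (G_Gs _ _ (bnd_mul hM hN)) /Gs /G /Gs.
set S := msize M; set T := msize N.
pose g k l := cm M k *m cm N l *m c (i - (k + l)%N%:Z).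
transitivity (\sum_(0 <= m < S + T) \sum_(0 <= l < m.+1) g l (m - l)%N).
  apply: eq_big_nat => m _; rewrite cm_mul mulmx_suml.
  apply: eq_big_nat => l /andP [_ hl]; rewrite /g subnKC //.
rewrite conv_trunc; last first.
- by move=> k l hl; rewrite /g hN // mulmx0 mul0mx.
- by move=> k l hk; rewrite /g hM // mul0mx mul0mx.
apply: eq_big_nat => k _; rewrite mulmx_sumr.
apply: eq_big_nat => l _; rewrite /g mulmxA; congr (_ *m c _).
rewrite PoszD; lia.
Qed.


Lemma cm_scaleX (K : comNzRingType) n (M : 'M[{poly K}]_n) s k :
  cm ('X^s *: M) k = if (k < s)%N then 0 else cm M (k - s)%N.
Proof.
apply/matrixP=> a b; rewrite !mxE coefXnM.
by case: ifP => _; rewrite ?mxE.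
Qed.

Lemma G_scaleX (K : comNzRingType) n (M : 'M[{poly K}]_n) s c i :
  G ('X^s *: M) c i = G M c (i - s%:Z).
Proof.
have hM := @bnd_msize _ _ M; set T := msize M.
have hb : bnd ('X^s *: M) (s + T).
  by move=> k hk; rewrite cm_scaleX; case: ifP => // _; rewrite hM //; lia.
rewrite (G_Gs _ _ hb) /G -/T /Gs (big_cat_nat (leq0n s) (leq_addr T s)) /=.
rewrite [X in X + _](_ : _ = 0) ?add0r; last first.
  by rewrite big_nat_cond big1 // => k /andP [/andP [_ hk] _]; rewrite cm_scaleX hk mul0mx.
rewrite -{1}(add0n s) big_addn addnC addnK.
apply: eq_big_nat => k _; rewrite cm_scaleX ltnNge leq_addl /= addnK.
congr (_ *m c _); rewrite PoszD; lia.
Qed.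

Lemma G_shift (K : comNzRingType) n (M : 'M[{poly K}]_n) s c i :
  G M (fun j => c (j + s)) i = G M c (i + s).
Proof.
apply: eq_big_nat => k _; congr (_ *m c _); lia.
Qed.

Lemma G_sub (K : comNzRingType) n (M : 'M[{poly K}]_n) c c' i :
  G M (fun j => c j - c' j) i = G M c i - G M c' i.
Proof.
by rewrite /G /Gs -sumrB; apply: eq_big_nat => k _; rewrite mulmxBr.
Qed.

Lemma G_local (K : comNzRingType) n (M : 'M[{poly K}]_n) c c' (N : nat) i :
  (forall j : int, (`|j| <= N + msize M)%N -> c j = c' j) ->
  (`|i| <= N)%N -> G M c i = G M c' i.
Proof.
move=> h hi; apply: eq_big_nat => k /andP [_ hk]; rewrite h //; lia.
Qed.

Definition PA (p n r : nat) (A : int -> 'M['F_p]_n) : 'M[{poly 'F_p}]_n :=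
  \matrix_(a, b) \poly_(m < (r + r).+1) A (r%:Z - m%:Z) a b.

Lemma cm_PA p n r (A : int -> 'M['F_p]_n) k :
  cm (PA r A) k = if (k < (r + r).+1)%N then A (r%:Z - k%:Z) else 0.
Proof.
apply/matrixP=> a b; rewrite !mxE coef_poly; by case: ifP => _ //; rewrite mxE.
Qed.

Lemma bnd_PA p n r (A : int -> 'M['F_p]_n) : bnd (PA r A) (r + r).+1.
Proof. by move=> k hk; rewrite cm_PA ltnNge hk. Qed.

Lemma iota_index N : iota 0 N = index_iota 0 N.
Proof. by rewrite /index_iota subn0. Qed.

Lemma lca_PA p n r (A : int -> 'M['F_p]_n) c i :
  lca r A c i = G (PA r A) c (i + r%:Z).
Proof.
rewrite (G_Gs _ _ (@bnd_PA _ _ _ _)) /Gs /lca /zrange big_map iota_index.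
rewrite [RHS]big_nat_rev /=; apply: eq_big_nat => k /andP [_ hk].
rewrite cm_PA add0n ifT; last by lia.
congr (A _ *m c _); lia.
Qed.


Lemma tofracX_neq0 p : FracField.tofrac ('X : {poly 'F_p}) != 0.
Proof. by rewrite tofrac_eq0 polyX_eq0. Qed.

Lemma lmx_PA p n r (A : int -> 'M['F_p]_n) :
  lmx r A = (FracField.tofrac ('X : {poly 'F_p})) ^ (- (r%:Z)) *:
              map_mx (@FracField.tofrac _) (PA r A).
Proof.
set x := FracField.tofrac ('X : {poly 'F_p}).
have hx : x != 0 by exact: tofracX_neq0.
apply/matrixP=> a b; rewrite !mxE /zrange big_map iota_index.
rewrite poly_def rmorph_sum mulr_sumr.
rewrite -(big_mkord (fun _ => true) (fun i : nat => x ^ (- r%:Z) * FracField.tofrac (A (r%:Z - i%:Z) a b *: 'X ^+ i))).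
rewrite [RHS]big_nat_rev /=; apply: eq_big_nat => k /andP [_ hk].
rewrite add0n -mul_polyC rmorphM rmorphXn -/x mulrCA.
have -> : (r%:Z - ((r + r).+1 - k.+1)%N%:Z) = k%:Z - r%:Z by lia.
congr (_ * _); rewrite exprnP -expfzDr //; congr (x ^ _); lia.
Qed.


Lemma poly_eq p n rA rB rQ (A B Q : int -> 'M['F_p]_n) :
  lmx rA A *m lmx rQ Q = lmx rQ Q *m lmx rB B ->
  'X^rB *: (PA rA A *m PA rQ Q) = 'X^rA *: (PA rQ Q *m PA rB B).
Proof.
set x := FracField.tofrac ('X : {poly 'F_p}).
have hx : x != 0 by exact: tofracX_neq0.
rewrite !lmx_PA -/x -!scalemxAl -!scalemxAr !scalerA => h.
have h2 := congr1 (fun M => x ^ (rA + rQ + rB)%N *: M) h.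
move: h2 => /=; rewrite !scalerA.
have -> : x ^ (rA + rQ + rB)%N * (x ^ (- rA%:Z) * x ^ (- rQ%:Z)) = x ^+ rB.
  by rewrite exprnP -!expfzDr //; congr (x ^ _); lia.
have -> : x ^ (rA + rQ + rB)%N * (x ^ (- rQ%:Z) * x ^ (- rB%:Z)) = x ^+ rA.
  by rewrite exprnP -!expfzDr //; congr (x ^ _); lia.
rewrite -!map_mxM /x -!rmorphXn -!map_mxZ => h3.
apply/matrixP=> a b; move/matrixP: h3 => /(_ a b); rewrite !mxE.
by move/eqP; rewrite tofrac_eq => /eqP.
Qed.

Lemma det_PA p n r (Q : int -> 'M['F_p]_n) :
  \det (lmx r Q) != 0 -> \det (PA r Q) != 0.
Proof.
apply: contraNneq => h; by rewrite lmx_PA detZ det_map_mx h rmorph0 mulr0.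
Qed.

Lemma adj_eq (K : idomainType) n (M1 M2 P : 'M[{poly K}]_n) s1 s2 :
  \det P != 0 ->
  'X^s2 *: (M1 *m P) = 'X^s1 *: (P *m M2) ->
  'X^s1 *: (M2 *m \adj P) = 'X^s2 *: (\adj P *m M1).
Proof.
move=> hd h.
have h2 := congr1 (fun M => \adj P *m M *m \adj P) h.
move: h2 => /=; rewrite -?scalemxAl -?scalemxAr -?scalemxAl -?scalemxAr.
rewrite -!mulmxA mul_mx_adj !mulmxA mul_adj_mx mul_mx_scalar mul_scalar_mx.
rewrite -!scalemxAl => h3.
apply/matrixP=> a b; move/matrixP: h3 => /(_ a b); rewrite !mxE => h4.
apply: (mulfI hd); by rewrite mulrCA -h4 mulrCA.
Qed.


Lemma ca_conj p n rA rB (A B : int -> 'M['F_p]_n) (P : 'M[{poly 'F_p}]_n) :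
  'X^rB *: (PA rA A *m P) = 'X^rA *: (P *m PA rB B) ->
  forall c, lca rA A (G P c) = G P (lca rB B c).
Proof.
move=> h c; apply: functional_extensionality => i.
have := congr1 (fun M => G M c (i + rA%:Z + rB%:Z)) h => /=.
rewrite !G_scaleX !G_mul => e.
have E1 : i + rA%:Z + rB%:Z - rB%:Z = i + rA%:Z by lia.
have E2 : i + rA%:Z + rB%:Z - rA%:Z = i + rB%:Z by lia.
rewrite E1 E2 in e.
have -> : lca rB B c = fun j => G (PA rB B) c (j + rB%:Z).
  by apply: functional_extensionality => j; exact: lca_PA.
by rewrite lca_PA G_shift.
Qed.

Lemma sum_one (V : zmodType) N a (f : nat -> V) :
  (a < N)%N -> (forall k, (k < N)%N -> k != a -> f k = 0) ->
  \sum_(0 <= k < N) f k = f a.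
Proof.
move=> ha hf.
have z1 : \sum_(0 <= k < a) f k = 0.
  rewrite big_nat_cond big1 // => k /andP [/andP [_ hk] _].
  by apply: hf; [lia | rewrite neq_ltn hk].
have z2 : \sum_(a.+1 <= k < N) f k = 0.
  rewrite big_nat_cond big1 // => k /andP [/andP [hk hk'] _].
  by apply: hf; [lia | rewrite neq_ltn hk orbT].
by rewrite (big_cat_nat (leq0n a) (ltnW ha)) /= (big_ltn ha) z1 z2 add0r addr0.
Qed.

Lemma rec_zero (K : fieldType) (V : lmodType K) (d : {poly K}) (w : int -> V) (L : nat) :
  d != 0 -> (size d <= L)%N ->
  (forall i, \sum_(0 <= k < size d) d`_k *: w (i - k%:Z) = 0) ->
  (forall j : int, (`|j| <= L)%N -> w j = 0) -> forall j, w j = 0.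
Proof.
move=> hd hL heq hw.
have [t htd] : exists t, size d = t.+1.
  by exists (size d).-1; rewrite prednK // size_poly_gt0.
have ht : d`_t != 0 by rewrite -[t]/(t.+1.-1) -htd -lead_coefE lead_coef_eq0.
have hex : exists k, d`_k != 0 by exists t.
case: (ex_minnP hex) => a ha hmin.
have hat : (a <= t)%N by apply: hmin.
rewrite htd in heq hL.
have up : forall m : nat, forall j : int, -(L%:Z) <= j -> j <= (L + m)%N%:Z -> w j = 0.
  elim=> [|m IH] j h1 h2; first by apply: hw; lia.
  case: (boolP (j <= (L + m)%N%:Z)) => hj; first exact: IH.
  have := heq (j + a%:Z); rewrite (@sum_one _ _ a); last first.
  - move=> k hk hka; case: (eqVneq d`_k 0) => [-> | hnz]; first by rewrite scale0r.
    have := hmin _ hnz => hak.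
    rewrite IH ?scaler0 //; lia.
  - lia.
  move/eqP; rewrite scaler_eq0 (negbTE ha) /=.
  by rewrite (_ : j + a%:Z - a%:Z = j) ?(@eqP _ _ 0) //; [move/eqP | lia].
have down : forall m : nat, forall j : int, -((L + m)%N%:Z) <= j -> j <= L%:Z -> w j = 0.
  elim=> [|m IH] j h1 h2; first by apply: hw; lia.
  case: (boolP (-((L + m)%N%:Z) <= j)) => hj; first exact: IH.
  have := heq (j + t%:Z); rewrite (@sum_one _ _ t); last first.
  - move=> k hk hkt; rewrite IH ?scaler0 //; lia.
  - lia.
  move/eqP; rewrite scaler_eq0 (negbTE ht) /=.
  by rewrite (_ : j + t%:Z - t%:Z = j) ?(@eqP _ _ 0) //; [move/eqP | lia].
move=> j; case: (lerP (-(L%:Z)) j) => h.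
  by apply: (up `|j|%N); lia.
by apply: (down `|j|%N); lia.
Qed.


Lemma cm_scal (K : comNzRingType) n (d : {poly K}) k :
  cm (d%:M : 'M_n) k = (d`_k)%:M.
Proof. by apply/matrixP=> a b; rewrite !mxE coefMn. Qed.

Lemma G_scal (K : comNzRingType) n (d : {poly K}) (w : int -> 'cV[K]_n) i :
  G (d%:M) w i = \sum_(0 <= k < size d) d`_k *: w (i - k%:Z).
Proof.
have hb : bnd (d%:M : 'M_n) (size d).
  by move=> k hk; rewrite cm_scal nth_default //; apply/matrixP=> ? ?; rewrite !mxE mul0rn.
rewrite (G_Gs _ _ hb); apply: eq_big_nat => k _; by rewrite cm_scal mul_scalar_mx.
Qed.

Lemma winj (K : fieldType) n (P PP : 'M[{poly K}]_n) (d : {poly K}) :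
  d != 0 -> PP *m P = d%:M ->
  forall c c', G P c = G P c' ->
  (forall j : int, (`|j| <= size d)%N -> c j = c' j) -> c = c'.
Proof.
move=> hd hPP c c' hG hw.
pose w := fun j => c j - c' j.
have hz : forall i, G (d%:M) w i = 0.
  move=> i; rewrite -hPP G_mul.
  have -> : G P w = fun _ => 0.
    by apply: functional_extensionality => j; rewrite G_sub hG subrr.
  by rewrite /G /Gs big1 // => k _; rewrite mulmx0.
have := @rec_zero _ _ d w (size d) hd (leqnn _).
move=> h; apply: functional_extensionality => j; apply/eqP; rewrite -subr_eq0; apply/eqP.
apply: h j.
- by move=> i; rewrite -G_scal.
- by move=> j' hj'; rewrite /w hw ?subrr.
Qed.

Local Open Scope R_scope.

Lemma decbP (P : Prop) : decb P = true <-> P.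
Proof. by rewrite /decb; case: excluded_middle_informative. Qed.

Lemma pow2_le (a b : nat) : (a <= b)%N -> / 2 ^ b <= / 2 ^ a.
Proof.
move=> hab; apply: Rinv_le_contravar; first by apply: pow_lt; lra.
by apply: Rle_pow; [lra | apply/ssrnat.leP].
Qed.

Lemma cdist_small p n (c c' : config p n) (N : nat) :
  (forall j : int, (`|j| <= N)%N -> c j = c' j) -> cdist c c' <= / 2 ^ N.+1.
Proof.
move=> h; rewrite /cdist; case: excluded_middle_informative => [H|H].
  case: ex_minnP => m /decbP [j [hj hne]] _.
  apply: pow2_le; rewrite ltnNge; apply/negP => hm; apply: hne; apply: h; by rewrite hj.
by apply: Rlt_le; apply: Rinv_0_lt_compat; apply: pow_lt; lra.
Qed.

Lemma cdist_large p n (c c' : config p n) (M : nat) :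
  cdist c c' < / 2 ^ M -> forall j : int, (`|j| <= M)%N -> c j = c' j.
Proof.
move=> hd j hj; apply: NNPP => hne.
have hex : exists m : nat, decb (exists j : int, `|j|%N = m /\ c j <> c' j).
  by exists `|j|%N; apply/decbP; exists j.
move: hd; rewrite /cdist; case: excluded_middle_informative => [H|H]; last by [].
case: ex_minnP => m hm hmin.
have : (m <= M)%N by apply: leq_trans hj; apply: hmin; apply/decbP; exists j.
move/pow2_le => h1 h2; lra.
Qed.

Lemma small_pow (eps : R) : 0 < eps -> exists N : nat, / 2 ^ N.+1 < eps.
Proof.
move=> he; have [N hN] := pow_lt_1_zero (/ 2) ltac:(rewrite Rabs_pos_eq; lra) eps he.
exists N; have := hN N.+1 (le_S _ _ (le_n N)).
by rewrite pow_inv Rabs_pos_eq //; apply: Rlt_le; apply: Rinv_0_lt_compat; apply: pow_lt; lra.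
Qed.

Lemma key p n (FA FB H : config p n -> config p n) (s L : nat) :
  (forall c, FA (H c) = H (FB c)) ->
  (forall c c' (N : nat), (forall j : int, (`|j| <= N + s)%N -> c j = c' j) ->
      forall i : int, (`|i| <= N)%N -> H c i = H c' i) ->
  (forall c c', H c = H c' -> (forall j : int, (`|j| <= L)%N -> c j = c' j) -> c = c') ->
  pos_expansive FA -> pos_expansive FB.
Proof.
move=> hcomm hloc hinj [eps [heps hexp]].
have [N hN] := small_pow heps.
pose M := (N + s + L)%N.
exists (/ 2 ^ M); split; first by apply: Rinv_0_lt_compat; apply: pow_lt; lra.
move=> c c' hne; apply: NNPP => hno.
have hall : forall l (j : int), (`|j| <= M)%N -> iter l FB c j = iter l FB c' j.
  move=> l; apply: cdist_large; apply: Rnot_le_lt => hle; apply: hno; by exists l.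
have hiter : forall l x, iter l FA (H x) = H (iter l FB x).
  by elim=> [|l IH] x //=; rewrite IH hcomm.
have hH : H c = H c'.
  apply: NNPP => hHne; have [l hl] := hexp _ _ hHne.
  rewrite !hiter in hl.
  have hag : forall i : int, (`|i| <= N)%N -> H (iter l FB c) i = H (iter l FB c') i.
    by apply: hloc => j hj; apply: hall; rewrite /M; lia.
  have := cdist_small hag; move=> h'; lra.
apply: hne; apply: hinj => // j hj; have := hall 0%N j; apply; rewrite /M; lia.
Qed.


Local Open Scope ring_scope.

Theorem lemma8 (p n : nat) (hp : prime p) (hn : (0 < n)%N)
  (rA rB rQ : nat) (A B Q : int -> 'M['F_p]_n)
  (hA : supported rA A) (hB : supported rB B) (hQ : supported rQ Q) :
  \det (lmx rQ Q) != 0 ->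
  lmx rA A *m lmx rQ Q = lmx rQ Q *m lmx rB B ->
  (pos_expansive (lca rA A) <-> pos_expansive (lca rB B)).
Proof.
move=> hdet heq.
have hd := det_PA hdet.
have E := poly_eq heq.
have E' := adj_eq hd E.
split.
- apply: (@key _ _ _ _ (G (PA rQ Q)) (msize (PA rQ Q)) (size (\det (PA rQ Q)))).
  + exact: ca_conj E.
  + move=> c c' N h i hi; exact: (G_local h hi).
  + move=> c c'; exact: (@winj _ n (PA rQ Q) (\adj (PA rQ Q)) (\det (PA rQ Q)) hd (mul_adj_mx _) c c').
- apply: (@key _ _ _ _ (G (\adj (PA rQ Q))) (msize (\adj (PA rQ Q))) (size (\det (PA rQ Q)))).
  + exact: ca_conj E'.
  + move=> c c' N h i hi; exact: (G_local h hi).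
  + move=> c c'; exact: (@winj _ n (\adj (PA rQ Q)) (PA rQ Q) (\det (PA rQ Q)) hd (mul_mx_adj _) c c').
Qed.
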